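(* Let $Q=\exists x_1\forall x_2\exists x_3\cdots\forall x_n\,F$ where $n\ge 2$ is even, the quantifiers strictly alternate starting with $\exists$, and $F=F_1\wedge\cdots\wedge F_m$ with $F_i=(l_{i,1}\vee l_{i,2}\vee l_{i,3})$, each literal $l_{i,j}$ being $x_l$ or $\overline{x_l}$ for some $l\in\{1,\dots,n\}$. Construct the graph-game instance $(G,C,s,R)$ as follows. For each $i=1,\dots,n$ add vertices $a_i,b_i,c_i,d_i,e_i,f_i,g_i$ and edges $(a_i,b_i),(a_i,c_i),(b_i,e_i),(c_i,f_i),(e_i,d_i),(f_i,d_i),(d_i,g_i)$; add edges $(g_i,a_{i+1})$ for $i=1,\dots,n-1$; add a vertex $g_0$ and edge $(g_0,a_1)$. Add vertices $x_i,y_i,z_i$ ($i=1,\dots,m$) and $w_{i,j}$ ($i=1,\dots,m$, $j=1,2,3$) with edges $(x_i,y_i),(y_i,z_i),(z_i,w_{i,1}),(w_{i,1},w_{i,2}),(w_{i,2},w_{i,3})$ for all $i$, $(x_i,x_{i+1})$ for $i=1,\dots,m-1$, and $(g_n,x_1)$. Let $C=\{g_0,\dots,g_{n-1}\}\cup\{z_1,\dots,z_m\}$, $s=g_0$, and let $R$ consist of the pairs $(w_{i,j},(b_l,e_l))$ whenever $l_{i,j}=x_l$ and $(w_{i,j},(c_l,f_l))$ whenever $l_{i,j}=\overline{x_l}$. Then the $\exists$-player has a winning strategy in the graph game on $(G,C,s,R)$ if and only if $Q$ is true.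
   Context: The graph game: an instance consists of a finite directed graph $G$, a set $C\subseteq V(G)$, a vertex $s\in C$, and a relation $R\subseteq V(G)\times E(G)$ (''$v$ points to $e$'' if $(v,e)\in R$). At any moment $E(G)$ is the current edge set (edges are deleted during play) and $R^{-1}(E(G))$ is the set of vertices pointing to some edge currently in $E(G)$. The $\exists$-player and $\forall$-player move alternately, $\exists$ first; there is a unique active vertex, initially $s$. A move from active vertex $u$: the current player chooses $v\in C\cup R^{-1}(E(G))$ and a directed path $P$ in the current graph from $u$ to $v$ whose internal vertices all lie outside $C\cup R^{-1}(E(G))$; the edges of $P$ are deleted, $v$ becomes active, and the turn passes. A player who cannot move loses; a player who moves to a vertex of $R^{-1}(E(G))$ wins. *)

(* Defs.v *)
From HB Require Import structures.
From mathcomp Require Import all_boot.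
Set Implicit Arguments. Unset Strict Implicit. Unset Printing Implicit Defensive.

Section Game.
Variable V : finType.
Variable C : {set V}.
Variable R : V -> V * V -> bool.

Definition pointers (E : {set V * V}) : {set V} :=
  [set v | [exists e in E, R v e]].

Definition stops (E : {set V * V}) : {set V} := C :|: pointers E.

(* A directed path u = v_0, v_1, ..., v_k = v (k >= 1) is encoded by    *)
(* u and the list p = [:: v_1; ...; v_k].                               *)
Definition path_edges (u : V) (p : seq V) : {set V * V} :=
  [set e in zip (belast u p) p].

Definition is_move (E : {set V * V}) (u v : V) (p : seq V) : bool :=
  [&& p != [::], last u p == v,
      path (fun x y => (x, y) \in E) u p, uniq (u :: p),
      v \in stops E &
      all (fun x => x \notin stops E) (behead (belast u p))].

(* Win E u : the player whose turn it is, with current edge set E and  *)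
(* active vertex u, has a winning strategy.  She makes a legal move to  *)
(* v along p; either v in R^{-1}(E) (she wins immediately), or every    *)
(* legal reply of the opponent (if none, the opponent loses) does not   *)
(* reach R^{-1} of the then-current graph and leads to a position that  *)
(* is again winning for her.  Every move deletes >= 1 edge, so the game *)
(* is finite and this inductive notion is exactly existence of a        *)
(* winning strategy.                                                    *)
Inductive Win : {set V * V} -> V -> Prop :=
| WinI E u v p :
    is_move E u v p ->
    (v \in pointers E \/
     (forall v' p',
        is_move (E :\: path_edges u p) v v' p' ->
        v' \notin pointers (E :\: path_edges u p) /\
        Win ((E :\: path_edges u p) :\: path_edges v p') v')) ->
    Win E u.

End Game.

(* Variables x_1..x_n are indexed by l : 'I_n (x_{l+1}).  A literal is  *)
(* (l, true) for x_{l+1} and (l, false) for its negation.  Clause i     *)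
(* (i : 'I_m) has literals cl i 0, cl i 1, cl i 2.                      *)

Definition cnf_eval (n m : nat) (cl : 'I_m -> 'I_3 -> 'I_n * bool)
    (asg : nat -> bool) : bool :=
  [forall i : 'I_m, [exists j : 'I_3, asg (val (cl i j).1) == (cl i j).2]].

(* quantifying variables with 0-based indices i, i+1, ..., i+k-1;      *)
(* variable with 0-based index i (i.e. x_{i+1}) is existential iff i   *)
(* is even.                                                            *)
Fixpoint qbf_from (phi : (nat -> bool) -> bool) (k i : nat)
    (asg : nat -> bool) : bool :=
  match k with
  | 0 => phi asg
  | k'.+1 =>
      let ext b := qbf_from phi k' i.+1 (fun j => if j == i then b else asg j) in
      if ~~ odd i then ext true || ext false else ext true && ext false
  end.

Definition qbf_true (n m : nat) (cl : 'I_m -> 'I_3 -> 'I_n * bool) : bool :=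
  qbf_from (cnf_eval cl) n 0 (fun _ => false).

(* The constructed instance.  Vertices:                                *)
(*   inl (inl (i, k))  : gadget of variable x_{i+1}, k = 0..6 for       *)
(*                       a,b,c,d,e,f,g                                 *)
(*   inl (inr tt)      : g_0                                           *)
(*   inr (i, k)        : clause i+1, k = 0..5 for x,y,z,w1,w2,w3        *)
Definition gvtx (n m : nat) : finType :=
  ((('I_n * 'I_7) + unit) + ('I_m * 'I_6))%type.

Section Construction.
Variables n m : nat.

Definition gv (i : 'I_n) (k : nat) : gvtx n m := inl (inl (i, inord k)).
Definition va i := gv i 0.  Definition vb i := gv i 1.
Definition vc i := gv i 2.  Definition vd i := gv i 3.
Definition ve i := gv i 4.  Definition vf i := gv i 5.
Definition vg i := gv i 6.
Definition vg0 : gvtx n m := inl (inr tt).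
Definition cv (i : 'I_m) (k : nat) : gvtx n m := inr (i, inord k).
Definition vx i := cv i 0.  Definition vy i := cv i 1.
Definition vz i := cv i 2.
(* w_{i, j+1} for j : 'I_3 *)
Definition vw i (j : 'I_3) := cv i (3 + val j).

Definition gedges : {set gvtx n m * gvtx n m} :=
  [set e | [exists i : 'I_n,
     [|| e == (va i, vb i), e == (va i, vc i), e == (vb i, ve i),
         e == (vc i, vf i), e == (ve i, vd i), e == (vf i, vd i)
       | e == (vd i, vg i)]]]
  :|: [set e | [exists i : 'I_n, exists j : 'I_n,
                 (val j == (val i).+1) && (e == (vg i, va j))]]
  :|: [set e | [exists i : 'I_n, (val i == 0) && (e == (vg0, va i))]]
  :|: [set e | [exists i : 'I_m,
     [|| e == (vx i, vy i), e == (vy i, vz i), e == (vz i, vw i (inord 0)),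
         e == (vw i (inord 0), vw i (inord 1))
       | e == (vw i (inord 1), vw i (inord 2))]]]
  :|: [set e | [exists i : 'I_m, exists j : 'I_m,
                 (val j == (val i).+1) && (e == (vx i, vx j))]]
  :|: [set e | [exists i : 'I_n, exists j : 'I_m,
                 [&& val i == n.-1, val j == 0 & e == (vg i, vx j)]]].

(* C = {g_0, ..., g_{n-1}} u {z_1, ..., z_m}; gadget i (0-based) has  *)
(* g-vertex g_{i+1}.                                                   *)
Definition gC : {set gvtx n m} :=
  [set vg0]
  :|: [set v | [exists i : 'I_n, (val i < n.-1) && (v == vg i)]]
  :|: [set v | [exists i : 'I_m, v == vz i]].

Definition gR (cl : 'I_m -> 'I_3 -> 'I_n * bool)
    (v : gvtx n m) (e : gvtx n m * gvtx n m) : bool :=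
  [exists i : 'I_m, exists j : 'I_3,
     (v == vw i j) &&
     (e == (if (cl i j).2 then (vb (cl i j).1, ve (cl i j).1)
            else (vc (cl i j).1, vf (cl i j).1)))].

End Construction.

(* Main.v *)
From Stdlib Require Import Lia.
Require Import Defs.
From HB Require Import structures.
From mathcomp Require Import all_boot.
Set Implicit Arguments. Unset Strict Implicit. Unset Printing Implicit Defensive.

Ltac nlia := repeat match goal with
  | H : is_true (_ <= _) |- _ => move/leP: H => H
  | H : is_true (_ == _) |- _ => move/eqP: H => H
  | H : is_true (~~ (_ == _)) |- _ => move/eqP: H => H
  | H : is_true (~~ (_ <= _)) |- _ => rewrite -ltnNge in H
  end;
  repeat match goal with
  | H : context [addn] |- _ => rewrite -plusE in H
  | H : context [muln] |- _ => rewrite -multE in H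
  | H : context [subn] |- _ => rewrite -minusE in H
  | H : context [double] |- _ => rewrite -addnn in H
  end;
  rewrite -?addnn -?plusE -?multE -?minusE;
  try (match goal with |- is_true _ =>
    first [apply/leP | apply/eqP | (apply/negP; move/eqP) | (apply/negP; move/leP)] end);
  lia.

Section Main.
Variables (n m : nat) (cl : 'I_m -> 'I_3 -> 'I_n * bool).
Hypotheses (hn : 2 <= n) (hm : 0 < m).

Local Notation V := (gvtx n m).
Local Notation C := (gC n m).
Local Notation R := (gR cl).
Local Notation E0 := (gedges n m).

Definition code (v : V) : nat * nat * nat :=
  match v with
  | inl (inl (i, k)) => (0, val i, val k)
  | inl (inr _) => (1, 0, 0)
  | inr (i, k) => (2, val i, val k)
  end.

Lemma code_inj : injective code.
Proof.
case=> [[[i k]|[]]|[i k]] [[[i' k']|[]]|[i' k']] //= [].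
- by move=> /val_inj -> /val_inj ->.
- by move=> /val_inj -> /val_inj ->.
Qed.

Lemma code_gv i k : k < 7 -> code (gv m i k) = (0, val i, k).
Proof. by move=> hk; rewrite /= inordK. Qed.
Lemma code_cv i k : k < 6 -> code (cv n i k) = (2, val i, k).
Proof. by move=> hk; rewrite /= inordK. Qed.

Lemma code_va i : code (va m i) = (0, val i, 0). Proof. exact: code_gv. Qed.
Lemma code_vb i : code (vb m i) = (0, val i, 1). Proof. exact: code_gv. Qed.
Lemma code_vc i : code (vc m i) = (0, val i, 2). Proof. exact: code_gv. Qed.
Lemma code_vd i : code (vd m i) = (0, val i, 3). Proof. exact: code_gv. Qed.
Lemma code_ve i : code (ve m i) = (0, val i, 4). Proof. exact: code_gv. Qed.
Lemma code_vf i : code (vf m i) = (0, val i, 5). Proof. exact: code_gv. Qed.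
Lemma code_vg i : code (vg m i) = (0, val i, 6). Proof. exact: code_gv. Qed.
Lemma code_vg0 : code (vg0 n m) = (1, 0, 0). Proof. by []. Qed.
Lemma code_vx i : code (vx n i) = (2, val i, 0). Proof. exact: code_cv. Qed.
Lemma code_vy i : code (vy n i) = (2, val i, 1). Proof. exact: code_cv. Qed.
Lemma code_vz i : code (vz n i) = (2, val i, 2). Proof. exact: code_cv. Qed.
Lemma code_vw i j : code (vw n i j) = (2, val i, 3 + val j).
Proof. by apply: code_cv; case: j => [[|[|[|]]]]. Qed.
Lemma inord3 k : k < 3 -> val (inord k : 'I_3) = k.
Proof. exact: inordK. Qed.

Definition codeE := (code_va, code_vb, code_vc, code_vd, code_ve, code_vf,
  code_vg, code_vg0, code_vx, code_vy, code_vz, code_vw).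

Definition rkc (c : nat * nat * nat) : nat :=
  let: (t, i, k) := c in
  if t is 0 then 7 * i + nth 0 [:: 1; 2; 3; 6; 4; 5; 7] k
  else if t is 1 then 0 else 7 * n + 1 + 6 * i + k.
Definition rk (v : V) := rkc (code v).

Definition gsc (c c' : nat * nat * nat) : bool :=
  let: (t, i, k) := c in
  match t, k with
  | 0, 0 => (c' == (0, i, 1)) || (c' == (0, i, 2))
  | 0, 1 => c' == (0, i, 4)
  | 0, 2 => c' == (0, i, 5)
  | 0, 4 => c' == (0, i, 3)
  | 0, 5 => c' == (0, i, 3)
  | 0, 3 => c' == (0, i, 6)
  | 0, 6 => if i.+1 < n then c' == (0, i.+1, 0) else (i.+1 == n) && (c' == (2, 0, 0))
  | 1, _ => c' == (0, 0, 0)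
  | 2, 0 => (c' == (2, i, 1)) || ((i.+1 < m) && (c' == (2, i.+1, 0)))
  | 2, 1 => c' == (2, i, 2)
  | 2, 2 => c' == (2, i, 3)
  | 2, 3 => c' == (2, i, 4)
  | 2, 4 => c' == (2, i, 5)
  | _, _ => false
  end.

Lemma gedges_sc u w : (u, w) \in E0 -> gsc (code u) (code w).
Proof.
rewrite !inE; case/orP => [/orP[/orP[/orP[/orP[H|H]|H]|H]|H]|H].
- by case/existsP: H => i; repeat case/orP; move/eqP=> [-> ->]; rewrite !codeE /= ?eqxx ?orbT.
- case/existsP: H => i /existsP[j /andP[/eqP hj /eqP[-> ->]]].
  by rewrite !codeE /= -hj ltn_ord eqxx.
- case/existsP: H => i /andP[/eqP hi /eqP[-> ->]].
  by rewrite !codeE /= hi.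
- by case/existsP: H => i; repeat case/orP; move/eqP=> [-> ->]; rewrite !codeE /= ?inord3 //= ?eqxx ?orbT.
- case/existsP: H => i /existsP[j /andP[/eqP hj /eqP[-> ->]]].
  by rewrite !codeE /= -hj ltn_ord eqxx orbT.
- case/existsP: H => i /existsP[j /and3P[/eqP hi /eqP hj /eqP[-> ->]]].
  rewrite !codeE /= hi hj prednK; last by apply: leq_trans hn.
  by rewrite ltnn eqxx.
Qed.

Lemma gsc_rk c c' : gsc c c' -> rkc c < rkc c'.
Proof.
case: c => [[t i] k].
case: t => [|[|[|t]]] //=.
- case: k => [|[|[|[|[|[|[|k]]]]]]] //=.
  + by case/orP=> /eqP-> /=; nlia.
  + by move/eqP-> => /=; nlia.
  + by move/eqP-> => /=; nlia.
  + by move/eqP-> => /=; nlia.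
  + by move/eqP-> => /=; nlia.
  + by move/eqP-> => /=; nlia.
  + case: ifP => [_ /eqP-> /=|_ /andP[/eqP hi /eqP-> /=]]; nlia.
- by move/eqP->.
- case: k => [|[|[|[|[|k]]]]] //=.
  + by case/orP=> [/eqP->|/andP[_ /eqP->]] /=; nlia.
  + by move/eqP-> => /=; nlia.
  + by move/eqP-> => /=; nlia.
  + by move/eqP-> => /=; nlia.
  + by move/eqP-> => /=; nlia.
Qed.

Lemma edge_rk u w : (u, w) \in E0 -> rk u < rk w.
Proof. by move/gedges_sc/gsc_rk. Qed.


Lemma path_rk (E : {set V * V}) u p : E \subset E0 ->
  path (fun x y => (x, y) \in E) u p -> path (fun x y => rk x < rk y) u p.
Proof. by move=> sE; apply: sub_path => x y /(subsetP sE) /edge_rk. Qed.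

Lemma path_uniq (E : {set V * V}) u p : E \subset E0 ->
  path (fun x y => (x, y) \in E) u p -> uniq (u :: p).
Proof.
move=> sE /(path_rk sE) hp.
have: sorted ltn (map rk (u :: p)) by rewrite /= path_map.
by move/(sorted_uniq ltn_trans ltnn)/map_uniq.
Qed.

Lemma moveE (E : {set V * V}) u v w q : E \subset E0 ->
  is_move C R E u v (w :: q) =
  ((u, w) \in E) && (if q is [::] then (w == v) && (v \in stops C R E)
                     else (w \notin stops C R E) && is_move C R E w v q).
Proof.
move=> sE; rewrite /is_move; case: q => [|y q] /=.
  apply/idP/idP.
    by case/and5P=> -> /andP[-> _] _ -> _.
  case/and3P=> huw hwv hv; rewrite huw hwv hv /= !andbT inE.
  by apply/eqP=> e; have := edge_rk (subsetP sE _ huw); rewrite e ltnn.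
apply/idP/idP.
  case/and5P=> hl /and3P[huw hwy hp] _ hv /andP[hw ha].
  rewrite hl huw hwy hp hv hw ha /= ?andbT.
  by apply: (path_uniq sE (u := w) (p := y :: q)); rewrite /= hwy hp.
case/and3P=> huw hw /and5P[hl /andP[hwy hp] _ hv ha].
rewrite hl huw hwy hp hv hw ha /= ?andbT.
by apply: (path_uniq sE (u := u) (p := [:: w, y & q])); rewrite /= huw hwy hp.
Qed.

Lemma moveNil (E : {set V * V}) u v : is_move C R E u v [::] = false.
Proof. by []. Qed.


Definition litE (p : 'I_n * bool) : V * V :=
  if p.2 then (vb m p.1, ve m p.1) else (vc m p.1, vf m p.1).

Lemma ptrP (E : {set V * V}) v : v \in pointers R E ->
  exists i j, v = vw n i j /\ litE (cl i j) \in E.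
Proof.
rewrite inE => /existsP[e /andP[he /existsP[i /existsP[j /andP[/eqP-> /eqP ee]]]]].
by exists i, j; split=> //; rewrite /litE -ee.
Qed.

Lemma ptr_code (E : {set V * V}) v : v \in pointers R E ->
  (code v).1.1 = 2 /\ 3 <= (code v).2.
Proof. by case/ptrP=> i [j [-> _]]; rewrite codeE. Qed.

Lemma vw_ptr (E : {set V * V}) i j : (vw n i j \in pointers R E) = (litE (cl i j) \in E).
Proof.
apply/idP/idP.
  case/ptrP=> i' [j' [/(congr1 code)]]; rewrite !codeE => -[/val_inj ei /eqP].
  by rewrite eqn_add2l => /eqP/val_inj ej; rewrite ei ej.
move=> h; rewrite inE; apply/existsP; exists (litE (cl i j)); rewrite h /=.
by apply/existsP; exists i; apply/existsP; exists j; apply/andP; split; apply/eqP.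
Qed.

Definition inCc (c : nat * nat * nat) : bool :=
  let: (t, i, k) := c in
  [|| t == 1, (t == 0) && (k == 6) && (i < n.-1) | (t == 2) && (k == 2)].

Lemma inC v : (v \in C) = inCc (code v).
Proof.
apply/idP/idP.
  rewrite !inE; case/orP => [/orP[/eqP->| /existsP[i' /andP[hi /eqP->]]]| /existsP[i' /eqP->]].
  - by rewrite !codeE.
  - by rewrite !codeE /= hi.
  - by rewrite !codeE /= ?orbT.
case: v => [[[i k]|[]]|[i k]] /=.
- rewrite orbF; case/andP=> /eqP hk hi; rewrite !inE; apply/orP; left; apply/orP; right.
  apply/existsP; exists i; rewrite hi; apply/eqP/code_inj; rewrite codeE /=.
  by rewrite hk.
- by rewrite !inE eqxx.
- move/eqP=> hk; rewrite !inE; apply/orP; right; apply/existsP; exists i.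
  by apply/eqP/code_inj; rewrite codeE /= hk.
Qed.

Lemma stopsE (E : {set V * V}) v : (v \in stops C R E) = (v \in C) || (v \in pointers R E).
Proof. by rewrite /stops inE. Qed.

Lemma nstop (E : {set V * V}) v : ~~ inCc (code v) ->
  ((code v).1.1 != 2) || ((code v).2 < 3) -> v \notin stops C R E.
Proof.
move=> hC hp; rewrite stopsE inC negb_or hC /=; apply/negP=> /ptr_code[h1 h2].
by move: hp; rewrite h1 /= ltnNge h2.
Qed.


Lemma decode0 w i k : code w = (0, i, k) -> k < 7 -> exists j : 'I_n, val j = i /\ w = gv m j k.
Proof.
case: w => [[[j kk]|[]]|[j kk]] //= [hj hk] hk7.
by exists j; split=> //; apply: code_inj; rewrite code_gv //= hk.
Qed.

Lemma decode2 w i k : code w = (2, i, k) -> k < 6 -> exists j : 'I_m, val j = i /\ w = cv n j k.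
Proof.
case: w => [[[j kk]|[]]|[j kk]] //= [hj hk] hk6.
by exists j; split=> //; apply: code_inj; rewrite code_cv //= hk.
Qed.

Ltac sc_tac := move/gedges_sc; rewrite !codeE /=.
Ltac ci h := apply: code_inj; rewrite h !codeE.

Lemma succ_va i w : (va m i, w) \in E0 -> w = vb m i \/ w = vc m i.
Proof. by sc_tac => /orP[/eqP h|/eqP h]; [left|right]; ci h. Qed.
Lemma succ_vb i w : (vb m i, w) \in E0 -> w = ve m i.
Proof. by sc_tac => /eqP h; ci h. Qed.
Lemma succ_vc i w : (vc m i, w) \in E0 -> w = vf m i.
Proof. by sc_tac => /eqP h; ci h. Qed.
Lemma succ_ve i w : (ve m i, w) \in E0 -> w = vd m i.
Proof. by sc_tac => /eqP h; ci h. Qed.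
Lemma succ_vf i w : (vf m i, w) \in E0 -> w = vd m i.
Proof. by sc_tac => /eqP h; ci h. Qed.
Lemma succ_vd i w : (vd m i, w) \in E0 -> w = vg m i.
Proof. by sc_tac => /eqP h; ci h. Qed.
Lemma succ_vg0 w : (vg0 n m, w) \in E0 -> exists j : 'I_n, val j = 0 /\ w = va m j.
Proof. by sc_tac => /eqP h; apply: decode0 h _. Qed.
Lemma succ_vg_mid i w : (vg m i, w) \in E0 -> i.+1 < n ->
  exists j : 'I_n, val j = i.+1 /\ w = va m j.
Proof. by sc_tac => + hi; rewrite hi => /eqP h; apply: decode0 h _. Qed.
Lemma succ_vg_last i w : (vg m i, w) \in E0 -> i.+1 = n ->
  exists j : 'I_m, val j = 0 /\ w = vx n j.
Proof. by sc_tac => + hi; rewrite hi ltnn => /andP[_ /eqP h]; apply: decode2 h _. Qed.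
Lemma succ_vx i w : (vx n i, w) \in E0 ->
  w = vy n i \/ exists j : 'I_m, val j = i.+1 /\ w = vx n j.
Proof.
sc_tac => /orP[/eqP h|/andP[_ /eqP h]]; first by left; ci h.
by right; apply: decode2 h _.
Qed.
Lemma succ_vy i w : (vy n i, w) \in E0 -> w = vz n i.
Proof. by sc_tac => /eqP h; ci h. Qed.
Lemma succ_vz i w : (vz n i, w) \in E0 -> w = vw n i (inord 0).
Proof. by sc_tac => /eqP h; ci h; rewrite inord3. Qed.
Lemma succ_vw0 i w : (vw n i (inord 0), w) \in E0 -> w = vw n i (inord 1).
Proof. by sc_tac; rewrite !inord3 //= => /eqP h; ci h; rewrite inord3. Qed.
Lemma succ_vw1 i w : (vw n i (inord 1), w) \in E0 -> w = vw n i (inord 2).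
Proof. by sc_tac; rewrite !inord3 //= => /eqP h; ci h; rewrite inord3. Qed.
Lemma succ_vw2 i w : (vw n i (inord 2), w) \in E0 -> False.
Proof. by sc_tac; rewrite !inord3. Qed.


Definition o0 : 'I_n := Ordinal (leq_trans (isT : 0 < 2) hn).
Definition om0 : 'I_m := Ordinal hm.
Definition ordn (k : nat) : 'I_n := insubd o0 k.
Definition ordm (k : nat) : 'I_m := insubd om0 k.
Lemma ordnK k : k < n -> val (ordn k) = k.
Proof. by move=> hk; rewrite val_insubd hk. Qed.
Lemma ordmK k : k < m -> val (ordm k) = k.
Proof. by move=> hk; rewrite val_insubd hk. Qed.
Lemma ordn_val (i : 'I_n) : ordn i = i.
Proof. by apply: val_inj; rewrite ordnK. Qed.
Lemma ordm_val (i : 'I_m) : ordm i = i.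
Proof. by apply: val_inj; rewrite ordmK. Qed.

Definition cur (k : nat) : V := if k is k'.+1 then vg m (ordn k') else vg0 n m.

Lemma rk_cur k : k <= n -> rk (cur k) = 7 * k.
Proof.
case: k => [|k] hk; first by [].
by rewrite /cur /rk code_vg /= ordnK // mulnS addnC.
Qed.

Definition Inv (r k : nat) (a : nat -> bool) (E : {set V * V}) : Prop :=
  [/\ E \subset E0,
      (forall u w, (u, w) \in E0 -> r <= rk u -> (u, w) \in E) &
      (forall l : 'I_n, l < k ->
         ((vb m l, ve m l) \in E) = a l /\ ((vc m l, vf m l) \in E) = ~~ a l)].

Lemma path_edges_nil u : path_edges u [::] = set0 :> {set V * V}.
Proof. by apply/setP=> e; rewrite !inE. Qed.

Lemma path_edges_cons u w q : path_edges u (w :: q) = (u, w) |: path_edges w q :> {set V * V}.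
Proof. by apply/setP=> e; rewrite !inE. Qed.

Lemma path_edges_cat u p q :
  path_edges u (p ++ q) = path_edges u p :|: path_edges (last u p) q :> {set V * V}.
Proof.
elim: p u => [|w p IH] u /=; first by rewrite path_edges_nil set0U.
by rewrite !path_edges_cons IH setUA.
Qed.

Lemma move_rk (E : {set V * V}) u v p : E \subset E0 -> is_move C R E u v p ->
  rk u < rk v /\ forall e, e \in path_edges u p -> rk u <= rk e.1 /\ rk e.1 < rk v.
Proof.
move=> sE; elim: p u => [|w q IH] u; first by rewrite moveNil.
rewrite (moveE _ _ _ _ sE) => /andP[huw].
have ruw := edge_rk (subsetP sE _ huw).
case: q IH => [|y q] IH.
  case/andP=> /eqP <- _; split=> // e; rewrite path_edges_cons path_edges_nil setU0.
  by move=> /set1P -> /=.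
case/andP=> _ /IH [rwv IHe]; split; first exact: ltn_trans rwv.
move=> e; rewrite path_edges_cons in_setU1 => /orP[/eqP -> //=|/IHe [h1 h2]].
  by split; [exact: leqnn | exact: ltn_trans ruw rwv].
by split=> //; apply: leq_trans h1; apply: ltnW.
Qed.

Lemma rk_va i : rk (va m i) = 7 * i + 1. Proof. by rewrite /rk codeE. Qed.
Lemma rk_vb i : rk (vb m i) = 7 * i + 2. Proof. by rewrite /rk codeE. Qed.
Lemma rk_vc i : rk (vc m i) = 7 * i + 3. Proof. by rewrite /rk codeE. Qed.
Lemma rk_vd i : rk (vd m i) = 7 * i + 6. Proof. by rewrite /rk codeE. Qed.
Lemma rk_ve i : rk (ve m i) = 7 * i + 4. Proof. by rewrite /rk codeE. Qed.
Lemma rk_vf i : rk (vf m i) = 7 * i + 5. Proof. by rewrite /rk codeE. Qed.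
Lemma rk_vg i : rk (vg m i) = 7 * i + 7. Proof. by rewrite /rk codeE. Qed.
Lemma rk_vx i : rk (vx n i) = 7 * n + 1 + 6 * i. Proof. by rewrite /rk codeE /= addn0. Qed.
Lemma rk_vy i : rk (vy n i) = 7 * n + 1 + 6 * i + 1. Proof. by rewrite /rk codeE. Qed.
Lemma rk_vz i : rk (vz n i) = 7 * n + 1 + 6 * i + 2. Proof. by rewrite /rk codeE. Qed.
Lemma rk_vw i j : rk (vw n i j) = 7 * n + 1 + 6 * i + (3 + j). Proof. by rewrite /rk codeE. Qed.
Definition rkE := (rk_va, rk_vb, rk_vc, rk_vd, rk_ve, rk_vf, rk_vg, rk_vx, rk_vy, rk_vz, rk_vw).

Lemma inv_step r k a (E : {set V * V}) u v p :
  Inv r k a E -> 7 * k <= r -> r <= rk u -> is_move C R E u v p ->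
  Inv (rk v) k a (E :\: path_edges u p).
Proof.
move=> [sE ahead lits] hkr hru hmv; have [ruv hpe] := move_rk sE hmv.
split.
- by apply: subset_trans sE; apply: subsetDl.
- move=> x y hxy hvx; rewrite inE ahead //; last first.
    by apply: leq_trans hvx; apply: ltnW; apply: leq_trans ruv.
  by rewrite andbT; apply/negP => /hpe [_ /=]; rewrite ltnNge hvx.
- move=> l hl; have [l1 l2] := lits l hl; rewrite !in_setD l1 l2.
  have nb : forall x y, rk x < 7 * k -> (x, y) \notin path_edges u p.
    move=> x y hx; apply/negP => /hpe [/= h _].
    by move: (leq_trans hkr (leq_trans hru h)); rewrite leqNgt hx.
  by rewrite !nb // rkE; nlia.
Qed.


Ltac LL := apply/orP; left.
Ltac RR := apply/orP; right.
Ltac F1 i := rewrite !inE; LL; LL; LL; LL; LL; apply/existsP; exists i; rewrite eqxx /= ?orbT.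
Ltac F4 i := rewrite !inE; LL; LL; RR; apply/existsP; exists i; rewrite eqxx /= ?orbT.

Lemma e_ab i : (va m i, vb m i) \in E0. Proof. by F1 i. Qed.
Lemma e_ac i : (va m i, vc m i) \in E0. Proof. by F1 i. Qed.
Lemma e_be i : (vb m i, ve m i) \in E0. Proof. by F1 i. Qed.
Lemma e_cf i : (vc m i, vf m i) \in E0. Proof. by F1 i. Qed.
Lemma e_ed i : (ve m i, vd m i) \in E0. Proof. by F1 i. Qed.
Lemma e_fd i : (vf m i, vd m i) \in E0. Proof. by F1 i. Qed.
Lemma e_dg i : (vd m i, vg m i) \in E0. Proof. by F1 i. Qed.
Lemma e_ga (i j : 'I_n) : val j = i.+1 -> (vg m i, va m j) \in E0.
Proof. by move=> h; rewrite !inE; LL; LL; LL; LL; RR; apply/existsP; exists i; apply/existsP; exists j; rewrite h !eqxx. Qed.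
Lemma e_g0a (j : 'I_n) : val j = 0 -> (vg0 n m, va m j) \in E0.
Proof. by move=> h; rewrite !inE; LL; LL; LL; RR; apply/existsP; exists j; rewrite h !eqxx. Qed.
Lemma e_xy i : (vx n i, vy n i) \in E0. Proof. by F4 i. Qed.
Lemma e_yz i : (vy n i, vz n i) \in E0. Proof. by F4 i. Qed.
Lemma e_zw i : (vz n i, vw n i (inord 0)) \in E0. Proof. by F4 i. Qed.
Lemma e_w01 i : (vw n i (inord 0), vw n i (inord 1)) \in E0. Proof. by F4 i. Qed.
Lemma e_w12 i : (vw n i (inord 1), vw n i (inord 2)) \in E0. Proof. by F4 i. Qed.
Lemma e_xx (i j : 'I_m) : val j = i.+1 -> (vx n i, vx n j) \in E0.
Proof. by move=> h; rewrite !inE; LL; RR; apply/existsP; exists i; apply/existsP; exists j; rewrite h !eqxx. Qed.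
Lemma e_gx (i : 'I_n) (j : 'I_m) : val i = n.-1 -> val j = 0 -> (vg m i, vx n j) \in E0.
Proof. by move=> h h'; rewrite !inE; RR; apply/existsP; exists i; apply/existsP; exists j; rewrite h h' !eqxx. Qed.


Lemma moveI (E : {set V * V}) u w v q : E \subset E0 -> (u, w) \in E ->
  w \notin stops C R E -> is_move C R E w v q -> is_move C R E u v (w :: q).
Proof.
move=> sE huw hw hm'; rewrite (moveE _ _ _ _ sE) huw /=.
by case: q hm' => [|y q] hm'; [rewrite moveNil in hm' | rewrite hw].
Qed.

Lemma moveI1 (E : {set V * V}) u w : E \subset E0 -> (u, w) \in E ->
  w \in stops C R E -> is_move C R E u w [:: w].
Proof. by move=> sE huw hw; rewrite (moveE _ _ _ _ sE) huw eqxx hw. Qed.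

Lemma moveC (E : {set V * V}) u w v q : E \subset E0 ->
  w \notin stops C R E -> is_move C R E u v (w :: q) ->
  (u, w) \in E /\ is_move C R E w v q.
Proof.
move=> sE hw; rewrite (moveE _ _ _ _ sE) => /andP[-> ].
case: q => [|y q]; last by case/andP.
by case/andP=> /eqP ev hv; rewrite ev hv in hw.
Qed.

Lemma step (E : {set V * V}) u v p w0 : E \subset E0 -> w0 \notin stops C R E ->
  (forall w, (u, w) \in E0 -> w = w0) -> is_move C R E u v p ->
  exists p', p = w0 :: p' /\ is_move C R E w0 v p'.
Proof.
move=> sE hs hw; case: p => [|w q]; first by rewrite moveNil.
move=> hm'; have := hm'; rewrite (moveE _ _ _ _ sE) => /andP[huw _].
have ew := hw _ (subsetP sE _ huw); subst w.
by have [_ h] := moveC sE hs hm'; exists q.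
Qed.

Lemma nsE (E : {set V * V}) v : ~~ inCc (code v) ->
  ((code v).1.1 != 2) || ((code v).2 < 3) -> v \notin stops C R E.
Proof. exact: nstop. Qed.

Ltac ns := apply: nstop; rewrite ?codeE //=.

Lemma succ_cur k w : k < n -> (cur k, w) \in E0 -> w = va m (ordn k).
Proof.
case: k => [|k] hk /=.
  by case/succ_vg0 => j [hj ->]; congr va; apply: val_inj; rewrite ordnK.
move/succ_vg_mid; rewrite ordnK ?hk; last by apply: ltnW.
by case=> // j [hj ->]; congr va; apply: val_inj; rewrite ordnK.
Qed.

Definition gp (k : nat) (b : bool) : seq V :=
  [:: va m (ordn k); if b then vc m (ordn k) else vb m (ordn k);
      if b then vf m (ordn k) else ve m (ordn k); vd m (ordn k); vg m (ordn k)].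

Definition gtail (E : {set V * V}) k v q :=
  if q is [::] then (vg m (ordn k) == v) && (v \in stops C R E)
  else (vg m (ordn k) \notin stops C R E) && is_move C R E (vg m (ordn k)) v q.

Lemma gadget_unfold r k a (E : {set V * V}) v p : Inv r k a E -> k < n ->
  is_move C R E (cur k) v p -> exists b q, p = gp k b ++ q /\ gtail E k v q.
Proof.
move=> [sE _ _] hk hmv; set i := ordn k.
have nsa : va m i \notin stops C R E by ns.
have nsb : vb m i \notin stops C R E by ns.
have nsc : vc m i \notin stops C R E by ns.
have nse : ve m i \notin stops C R E by ns.
have nsf : vf m i \notin stops C R E by ns.
have nsd : vd m i \notin stops C R E by ns.
have [p1 [-> hm1]] := step sE nsa (fun w => @succ_cur k w hk) hmv.
case: p1 hm1 => [|w2 p2]; first by rewrite moveNil.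
move=> hm2; have := hm2; rewrite (moveE _ _ _ _ sE) => /andP[h2 _].
case: (succ_va (subsetP sE _ h2)) => ew2; subst w2.
- have [_ hm3] := moveC sE nsb hm2.
  have [p3 [-> hm4]] := step sE nse (fun w => @succ_vb _ w) hm3.
  have [p4 [-> hm5]] := step sE nsd (fun w => @succ_ve _ w) hm4.
  case: p4 hm5 => [|w5 q]; first by rewrite moveNil.
  rewrite (moveE _ _ _ _ sE) => /andP[h5 ht]; have ew5 := succ_vd (subsetP sE _ h5); subst w5.
  by exists false, q.
- have [_ hm3] := moveC sE nsc hm2.
  have [p3 [-> hm4]] := step sE nsf (fun w => @succ_vc _ w) hm3.
  have [p4 [-> hm5]] := step sE nsd (fun w => @succ_vf _ w) hm4.
  case: p4 hm5 => [|w5 q]; first by rewrite moveNil.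
  rewrite (moveE _ _ _ _ sE) => /andP[h5 ht]; have ew5 := succ_vd (subsetP sE _ h5); subst w5.
  by exists true, q.
Qed.


Lemma edge_cur k : k < n -> (cur k, va m (ordn k)) \in E0.
Proof.
case: k => [|k] hk /=; first by apply: e_g0a; rewrite ordnK.
by apply: e_ga; rewrite !ordnK // ltnW.
Qed.

Lemma gadget_build r k a (E : {set V * V}) v q b : Inv r k a E -> r <= 7 * k -> k < n ->
  gtail E k v q -> is_move C R E (cur k) v (gp k b ++ q).
Proof.
move=> [sE ah _] hr hk ht; set i := ordn k.
have hi : val i = k by rewrite ordnK.
have ahE : forall x y, (x, y) \in E0 -> 7 * k <= rk x -> (x, y) \in E.
  by move=> x y h h'; apply: ah h (leq_trans hr h').
have nsa : va m i \notin stops C R E by ns.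
have nsb : vb m i \notin stops C R E by ns.
have nsc : vc m i \notin stops C R E by ns.
have nse : ve m i \notin stops C R E by ns.
have nsf : vf m i \notin stops C R E by ns.
have nsd : vd m i \notin stops C R E by ns.
have tl : is_move C R E (vd m i) v (vg m i :: q).
  case: q ht => [|y q] /=.
    by case/andP=> /eqP <- hv; apply: moveI1 => //; apply: ahE (e_dg _) _; rewrite rkE hi; nlia.
  case/andP=> hs hmv; apply: moveI => //; apply: ahE (e_dg _) _; rewrite rkE hi; nlia.
rewrite /gp /=; apply: moveI => //.
  by apply: ahE (edge_cur hk) _; rewrite rk_cur // ltnW.
case: b.
- apply: moveI => //; first by apply: ahE (e_ac _) _; rewrite rkE hi; nlia.
  apply: moveI => //; first by apply: ahE (e_cf _) _; rewrite rkE hi; nlia.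
  by apply: moveI => //; apply: ahE (e_fd _) _; rewrite rkE hi; nlia.
- apply: moveI => //; first by apply: ahE (e_ab _) _; rewrite rkE hi; nlia.
  apply: moveI => //; first by apply: ahE (e_be _) _; rewrite rkE hi; nlia.
  by apply: moveI => //; apply: ahE (e_ed _) _; rewrite rkE hi; nlia.
Qed.


Definition upd (a : nat -> bool) (k : nat) (b : bool) : nat -> bool :=
  fun j => if j == k then b else a j.

Lemma inv_weak r r' k a (E : {set V * V}) : Inv r k a E -> r <= r' -> Inv r' k a E.
Proof. by move=> [sE ah li] hr; split=> // u w h h'; apply: ah h (leq_trans hr h'). Qed.

Lemma pe_src u p e : path (fun x y => rk x < rk y) u p -> e \in path_edges u p -> rk u <= rk e.1.
Proof.
elim: p u => [|w p IH] u; first by rewrite path_edges_nil inE.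
rewrite path_edges_cons in_setU1 /= => /andP[huw hp] /orP[/eqP -> //|/(IH _ hp)].
by apply: leq_trans; apply: ltnW.
Qed.

Lemma gp_status k b : k < n ->
  ((vb m (ordn k), ve m (ordn k)) \in path_edges (cur k) (gp k b)) = ~~ b /\
  ((vc m (ordn k), vf m (ordn k)) \in path_edges (cur k) (gp k b)) = b.
Proof.
move=> hk; case: b; rewrite /gp !path_edges_cons path_edges_nil !in_setU1 !in_set0 !xpair_eqE;
  rewrite -!(inj_eq code_inj) !codeE; case: k hk => [|k] hk;
  rewrite /= ?codeE /= !xpair_eqE ?inordK // /= ?eqxx /= ?andbF ?orbT //=.
Qed.


Lemma gadget_after r k a (E : {set V * V}) v b q : Inv r k a E -> r <= 7 * k -> k < n ->
  is_move C R E (cur k) v (gp k b ++ q) ->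
  Inv (rk v) k.+1 (upd a k b) (E :\: path_edges (cur k) (gp k b ++ q)).
Proof.
move=> hI hr hk hmv.
have hI7 := inv_weak hI hr.
have hc : 7 * k <= rk (cur k) by rewrite rk_cur // ltnW.
have [sE' ah' li'] := inv_step hI7 (leqnn _) hc hmv.
have [sE ah _] := hI7.
split=> // l hl.
case: (ltnP l k) => hlk.
  by have := li' l hlk; rewrite /upd (ltn_eqF hlk).
have el : l = ordn k by apply: val_inj; rewrite ordnK //; apply/eqP; rewrite eqn_leq hlk -ltnS hl.
rewrite el /upd ordnK // eqxx.
have [st1 st2] := gp_status b hk.
case/and4P: hmv => _ _ hp _.
have := path_rk sE hp; rewrite cat_path => /andP[_ hq].
have nq : forall x y, rk x < rk (vg m (ordn k)) -> ((x, y) \in path_edges (vg m (ordn k)) q) = false.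
  by move=> x y hx; apply/negP => /(pe_src hq) /=; rewrite leqNgt hx.
rewrite !in_setD !path_edges_cat !in_setU st1 st2 /= !nq ?rkE; try nlia.
rewrite !ah ?e_be ?e_cf ?rkE ?ordnK //; try nlia.
by case: (b).
Qed.


Lemma vg_stop (E : {set V * V}) k : k.+1 < n -> vg m (ordn k) \in stops C R E.
Proof.
move=> hk; have hk' : k < n by apply: ltn_trans hk.
rewrite stopsE inC codeE /= ordnK // (_ : k < n.-1) //; nlia.
Qed.

Lemma vg_nstop (E : {set V * V}) k : k.+1 = n -> vg m (ordn k) \notin stops C R E.
Proof.
move=> hk; ns; rewrite ordnK; last by rewrite -hk.
by rewrite -hk /= ltnn.
Qed.

Lemma mid_unfold r k a (E : {set V * V}) v p : Inv r k a E -> k.+1 < n ->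
  is_move C R E (cur k) v p -> exists b, v = cur k.+1 /\ p = gp k b.
Proof.
move=> hI hk hmv; have [b [q [-> ht]]] := gadget_unfold hI (ltn_trans (ltnSn k) hk) hmv.
exists b; case: q ht => [|y q] /=.
  by case/andP=> /eqP <- _; rewrite ?cats0.
by rewrite (vg_stop _ hk).
Qed.

Lemma mid_build r k a (E : {set V * V}) b : Inv r k a E -> r <= 7 * k -> k.+1 < n ->
  is_move C R E (cur k) (cur k.+1) (gp k b).
Proof.
move=> hI hr hk; rewrite -[gp k b]cats0; apply: gadget_build hI hr (ltn_trans (ltnSn k) hk) _.
by rewrite /gtail eqxx vg_stop.
Qed.

Lemma xchain (E : {set V * V}) v q : E \subset E0 ->
  forall j, is_move C R E (vx n j) v q -> exists j', v = vz n j'.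
Proof.
move=> sE; elim: q => [|w q IH] j; first by rewrite moveNil.
move=> hmv; have := hmv; rewrite (moveE _ _ _ _ sE) => /andP[hw _].
case: (succ_vx (subsetP sE _ hw)) => [ew|[j' [_ ew]]]; subst w.
  have nsy : vy n j \notin stops C R E by ns.
  have [_ hm2] := moveC sE nsy hmv.
  case: q hm2 {IH hmv} => [|w q]; first by rewrite moveNil.
  rewrite (moveE _ _ _ _ sE) => /andP[hw2]; rewrite (succ_vy (subsetP sE _ hw2)).
  case: q => [|y q]; first by case/andP=> /eqP <- _; exists j.
  by rewrite stopsE inC codeE.
have nsx : vx n j' \notin stops C R E by ns.
have [_ hm2] := moveC sE nsx hmv.
exact: IH hm2.
Qed.

Lemma last_unfold r k a (E : {set V * V}) v p : Inv r k a E -> k.+1 = n ->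
  is_move C R E (cur k) v p -> exists b q j, p = gp k b ++ q /\ v = vz n j.
Proof.
move=> hI hk hmv; have [sE _ _] := hI.
have [b [q [-> ht]]] := gadget_unfold hI (ltac:(by rewrite -hk)) hmv.
exists b, q; case: q ht => [|y q] /=.
  by case/andP=> /eqP ev hv; rewrite -ev (negbTE (vg_nstop _ hk)) in hv.
case/andP=> _ hm1; have := hm1; rewrite (moveE _ _ _ _ sE) => /andP[hy _].
have [j [_ ey]] := succ_vg_last (subsetP sE _ hy) (ltac:(by rewrite ordnK // -hk)).
subst y; have nsx : vx n j \notin stops C R E by ns.
have [_ hm2] := moveC sE nsx hm1.
by have [j' ->] := xchain sE hm2; exists j'.
Qed.


Lemma WinE (E : {set V * V}) u : Win C R E u -> exists v p, is_move C R E u v p /\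
  (v \in pointers R E \/
   forall v' p', is_move C R (E :\: path_edges u p) v v' p' ->
     v' \notin pointers R (E :\: path_edges u p) /\
     Win C R ((E :\: path_edges u p) :\: path_edges v p') v').
Proof. by case=> E1 u1 v p hmv h; exists v, p. Qed.

Lemma w_nC j t : vw n j t \notin C.
Proof.
by rewrite inC codeE.
Qed.

Lemma w_stop (E : {set V * V}) j t : (vw n j t \in stops C R E) = (vw n j t \in pointers R E).
Proof. by rewrite stopsE (negbTE (w_nC _ _)). Qed.

Lemma ptr_w r a (E : {set V * V}) j t : Inv r n a E ->
  (vw n j t \in pointers R E) = (a (cl j t).1 == (cl j t).2).
Proof.
move=> [_ _ li]; rewrite vw_ptr /litE.
have [h1 h2] := li _ (ltn_ord (cl j t).1).
by case: (cl j t).2; rewrite ?h1 ?h2 ?eqb_id ?eqbF_neg.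
Qed.

Lemma final_win r a (E : {set V * V}) j : Inv r n a E -> r <= rk (vz n j) ->
  (Win C R E (vz n j) <-> [exists t : 'I_3, a (cl j t).1 == (cl j t).2]).
Proof.
move=> hI hr; have [sE ah _] := hI.
have ahE : forall x y, (x, y) \in E0 -> rk (vz n j) <= rk x -> (x, y) \in E.
  by move=> x y h h'; apply: ah h (leq_trans hr h').
have e0 : (vz n j, vw n j (inord 0)) \in E by apply: ahE (e_zw _) _.
have e1 : (vw n j (inord 0), vw n j (inord 1)) \in E.
  by apply: ahE (e_w01 _) _; rewrite !rkE; nlia.
have e2 : (vw n j (inord 1), vw n j (inord 2)) \in E.
  by apply: ahE (e_w12 _) _; rewrite !rkE; nlia.
split.
  case/WinE=> v [p [hmv _]].
  case: p hmv => [|w0 q]; first by rewrite moveNil.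
  move=> hmv; have := hmv; rewrite (moveE _ _ _ _ sE) => /andP[hw0 _].
  rewrite (succ_vz (subsetP sE _ hw0)) in hmv.
  case h0: (vw n j (inord 0) \in pointers R E).
    by apply/existsP; exists (inord 0); rewrite -(ptr_w _ _ hI) h0.
  have n0 : vw n j (inord 0) \notin stops C R E by rewrite w_stop h0.
  have [_ hm1] := moveC sE n0 hmv.
  case: q hm1 {hmv} => [|w1 q]; first by rewrite moveNil.
  move=> hm1; have := hm1; rewrite (moveE _ _ _ _ sE) => /andP[hw1 _].
  rewrite (succ_vw0 (subsetP sE _ hw1)) in hm1.
  case h1: (vw n j (inord 1) \in pointers R E).
    by apply/existsP; exists (inord 1); rewrite -(ptr_w _ _ hI) h1.
  have n1 : vw n j (inord 1) \notin stops C R E by rewrite w_stop h1.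
  have [_ hm2] := moveC sE n1 hm1.
  case: q hm2 {hm1} => [|w2 q]; first by rewrite moveNil.
  move=> hm2; have := hm2; rewrite (moveE _ _ _ _ sE) => /andP[hw2 _].
  rewrite (succ_vw1 (subsetP sE _ hw2)) in hm2.
  case h2: (vw n j (inord 2) \in pointers R E).
    by apply/existsP; exists (inord 2); rewrite -(ptr_w _ _ hI) h2.
  have n2 : vw n j (inord 2) \notin stops C R E by rewrite w_stop h2.
  have [_ hm3] := moveC sE n2 hm2.
  case: q hm3 {hm2} => [|w3 q]; first by rewrite moveNil.
  rewrite (moveE _ _ _ _ sE) => /andP[hw3 _].
  by case: (succ_vw2 (subsetP sE _ hw3)).
case/existsP=> t; rewrite -(ptr_w _ _ hI) => ht.
case h0: (vw n j (inord 0) \in pointers R E).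
  apply: (@WinI _ _ _ E (vz n j) (vw n j (inord 0)) [:: vw n j (inord 0)]); last by left.
  by apply: moveI1 => //; rewrite w_stop.
case h1: (vw n j (inord 1) \in pointers R E).
  apply: (@WinI _ _ _ E (vz n j) (vw n j (inord 1)) [:: vw n j (inord 0); vw n j (inord 1)]); last by left.
  by apply: moveI => //; [rewrite w_stop h0 | apply: moveI1 => //; rewrite w_stop].
have h2 : vw n j (inord 2) \in pointers R E.
  move: ht; rewrite -(inord_val t); case: t => [[|[|[|t]]] ht'] //=; by rewrite ?h0 ?h1.
apply: (@WinI _ _ _ E (vz n j) (vw n j (inord 2)) [:: vw n j (inord 0); vw n j (inord 1); vw n j (inord 2)]); last by left.
apply: moveI => //; first by rewrite w_stop h0.
apply: moveI => //; first by rewrite w_stop h1.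
by apply: moveI1 => //; rewrite w_stop.
Qed.


Local Notation phi := (cnf_eval cl).

Lemma qbf2 k i a : ~~ odd i ->
  qbf_from phi k.+2 i a =
  (qbf_from phi k i.+2 (upd (upd a i true) i.+1 true) &&
   qbf_from phi k i.+2 (upd (upd a i true) i.+1 false)) ||
  (qbf_from phi k i.+2 (upd (upd a i false) i.+1 true) &&
   qbf_from phi k i.+2 (upd (upd a i false) i.+1 false)).
Proof. by move=> hi; rewrite /= hi. Qed.

Lemma xmove_exists r k a (E : {set V * V}) (i : 'I_m) : Inv r k a E -> r <= 7 * k -> k < n ->
  forall d (j : 'I_m), val j + d = val i -> exists xs, is_move C R E (vx n j) (vz n i) xs.
Proof.
move=> [sE ah _] hr hk.
have ahE : forall x y, (x, y) \in E0 -> 7 * n <= rk x -> (x, y) \in E.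
  have r7 : r <= 7 * n by apply: (leq_trans hr); nlia.
  by move=> x y h h'; apply: ah h (leq_trans r7 h').
elim=> [|d IH] j hj.
  rewrite addn0 in hj; have -> : j = i by apply: val_inj.
  exists [:: vy n i; vz n i]; apply: moveI => //.
  - by apply: ahE (e_xy _) _; rewrite rkE; nlia.
  - by ns.
  - apply: moveI1 => //; first by apply: ahE (e_yz _) _; rewrite rkE; nlia.
    by rewrite stopsE inC codeE.
have hj1 : j.+1 < m by apply: (leq_trans _ (ltn_ord i)); move: hj => /= hj; nlia.
have [xs hxs] := IH (ordm j.+1) (ltac:(by rewrite ordmK // -hj addnS)).
exists (vx n (ordm j.+1) :: xs); apply: moveI => //.
  by apply: ahE (e_xx (ordmK hj1)) _; rewrite rkE; nlia.
by ns.
Qed.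

Lemma last_move_exists r k a (E : {set V * V}) (i : 'I_m) b : Inv r k a E -> r <= 7 * k -> k.+1 = n ->
  exists q, is_move C R E (cur k) (vz n i) (gp k b ++ q).
Proof.
move=> hI hr hk; have [sE ah _] := hI.
have hkn : k < n by rewrite -hk.
have [xs hxs] := xmove_exists hI hr hkn (add0n i : val om0 + i = val i).
exists (vx n om0 :: xs); apply: (@gadget_build r k a E (vz n i) (vx n om0 :: xs) b hI hr hkn).
rewrite /gtail vg_nstop //=; apply: moveI => //.
  apply: ah; first by apply: e_gx; rewrite ?ordnK // -hk.
  by rewrite rkE ordnK //; apply: (leq_trans hr); nlia.
by ns.
Qed.


Lemma dbl2 j : j.+2.*2 = (j.+1.*2).+2.
Proof. by rewrite doubleS. Qed.

Lemma win_of_qbf j : forall k a (E : {set V * V}), k + j.+1.*2 = n -> ~~ odd k ->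
  Inv (7 * k) k a E -> qbf_from phi (j.+1.*2) k a -> Win C R E (cur k).
Proof.
elim: j => [|j IH] k a E hkn hodd hI.
- rewrite (_ : 1.*2 = 0.+2) // qbf2 // => hq.
  have [b hb] : exists b, forall b', qbf_from phi 0 k.+2 (upd (upd a k b) k.+1 b').
    by case/orP: hq => /andP[h1 h2]; [exists true | exists false]; case.
  have hk1 : k.+1 < n by rewrite -hkn; nlia.
  have hk2 : k.+2 = n by rewrite -hkn; nlia.
  have hmv : is_move C R E (cur k) (cur k.+1) (gp k b ++ [::]).
    by rewrite cats0; apply: (mid_build _ hI (leqnn _) hk1).
  apply: (@WinI _ _ _ E (cur k) (cur k.+1) (gp k b)); first by rewrite -[gp k b]cats0.
  right=> v' p' hm'.
  have hI1 := gadget_after hI (leqnn _) (ltn_trans (ltnSn k) hk1) hmv.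
  rewrite cats0 rk_cur in hI1; last exact: ltnW.
  have [b' [q [j' [ep ev]]]] := last_unfold hI1 hk2 hm'; subst p' v'.
  split; first by apply/negP => /ptr_code; rewrite codeE => -[].
  have hI2 := gadget_after hI1 (leqnn _) hk1 hm'; rewrite hk2 in hI2.
  apply/(final_win hI2 (leqnn _)).
  by move/forallP: (hb b') => /(_ j').
- rewrite dbl2 qbf2 // => hq.
  have [b hb] : exists b, forall b', qbf_from phi (j.+1.*2) k.+2 (upd (upd a k b) k.+1 b').
    by case/orP: hq => /andP[h1 h2]; [exists true | exists false]; case.
  have hk1 : k.+1 < n by rewrite -hkn; nlia.
  have hk2 : k.+2 < n by rewrite -hkn; nlia.
  have hmv : is_move C R E (cur k) (cur k.+1) (gp k b ++ [::]).
    by rewrite cats0; apply: (mid_build _ hI (leqnn _) hk1).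
  apply: (@WinI _ _ _ E (cur k) (cur k.+1) (gp k b)); first by rewrite -[gp k b]cats0.
  right=> v' p' hm'.
  have hI1 := gadget_after hI (leqnn _) (ltn_trans (ltnSn k) hk1) hmv.
  rewrite cats0 rk_cur in hI1; last exact: ltnW.
  have [b' [ev ep]] := mid_unfold hI1 hk2 hm'; subst p' v'.
  split; first by apply/negP => /ptr_code; rewrite /= ?codeE => -[].
  have hm2 : is_move C R (E :\: path_edges (cur k) (gp k b)) (cur k.+1) (cur k.+2) (gp k.+1 b' ++ [::]).
    by rewrite cats0.
  have hI2 := gadget_after hI1 (leqnn _) (ltn_trans (ltnSn _) hk2) hm2.
  rewrite cats0 rk_cur in hI2; last exact: ltnW.
  apply: IH hI2 (hb b').
  + by rewrite -hkn; nlia.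
  + by rewrite /= negbK.
Qed.


Lemma qbf_of_win j : forall k a (E : {set V * V}), k + j.+1.*2 = n -> ~~ odd k ->
  Inv (7 * k) k a E -> Win C R E (cur k) -> qbf_from phi (j.+1.*2) k a.
Proof.
elim: j => [|j IH] k a E hkn hodd hI hW.
- rewrite (_ : 1.*2 = 0.+2) // qbf2 //.
  have hk1 : k.+1 < n by rewrite -hkn; nlia.
  have hk2 : k.+2 = n by rewrite -hkn; nlia.
  case/WinE: hW => v [p [hmv hor]].
  have [b [ev ep]] := mid_unfold hI hk1 hmv; subst v p.
  case: hor => [hp|H]; first by move/ptr_code: hp; rewrite /= ?codeE => -[].
  have hmv' : is_move C R E (cur k) (cur k.+1) (gp k b ++ [::]) by rewrite cats0.
  have hI1 := gadget_after hI (leqnn _) (ltn_trans (ltnSn k) hk1) hmv'.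
  rewrite cats0 rk_cur in hI1; last exact: ltnW.
  suff hb : forall b', qbf_from phi 0 k.+2 (upd (upd a k b) k.+1 b').
    by move: hb; case: (b) => hb; rewrite !hb ?orbT.
  move=> b'; apply/forallP => i.
  have [q hq] := last_move_exists i b' hI1 (leqnn _) hk2.
  have [_ hW2] := H _ _ hq.
  have hI2 := gadget_after hI1 (leqnn _) hk1 hq; rewrite hk2 in hI2.
  exact/(final_win hI2 (leqnn _)).
- rewrite dbl2 qbf2 //.
  have hk1 : k.+1 < n by rewrite -hkn; nlia.
  have hk2 : k.+2 < n by rewrite -hkn; nlia.
  case/WinE: hW => v [p [hmv hor]].
  have [b [ev ep]] := mid_unfold hI hk1 hmv; subst v p.
  case: hor => [hp|H]; first by move/ptr_code: hp; rewrite /= ?codeE => -[].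
  have hmv' : is_move C R E (cur k) (cur k.+1) (gp k b ++ [::]) by rewrite cats0.
  have hI1 := gadget_after hI (leqnn _) (ltn_trans (ltnSn k) hk1) hmv'.
  rewrite cats0 rk_cur in hI1; last exact: ltnW.
  suff hb : forall b', qbf_from phi (j.+1.*2) k.+2 (upd (upd a k b) k.+1 b').
    by move: hb; case: (b) => hb; rewrite !hb ?orbT.
  move=> b'.
  have hq := mid_build b' hI1 (leqnn _) hk2.
  have [_ hW2] := H _ _ hq.
  have hq' : is_move C R (E :\: path_edges (cur k) (gp k b)) (cur k.+1) (cur k.+2) (gp k.+1 b' ++ [::]).
    by rewrite cats0.
  have hI2 := gadget_after hI1 (leqnn _) (ltn_trans (ltnSn _) hk2) hq'.
  rewrite cats0 rk_cur in hI2; last exact: ltnW.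
  apply: IH hI2 hW2.
  + by rewrite -hkn; nlia.
  + by rewrite /= negbK.
Qed.

Lemma main_sec : ~~ odd n -> (Win C R E0 (vg0 n m) <-> qbf_true cl).
Proof.
move=> hev.
have hI : Inv 0 0 (fun _ => false) E0 by split=> //.
have hh : 0 < n./2.
  by have := even_halfK hev; case: (n./2) => [|h] //= e; move: hn; rewrite -e.
set N := (n./2).-1.+1.*2.
have eN : N = n by rewrite /N prednK // even_halfK.
have hj : 0 + N = n by rewrite add0n.
have -> : qbf_true cl = qbf_from phi N 0 (fun _ => false) by rewrite eN.
split.
  by move=> hW; apply: (@qbf_of_win (n./2).-1 0 (fun _ => false) E0 hj isT hI hW).
by move=> hq; apply: (@win_of_qbf (n./2).-1 0 (fun _ => false) E0 hj isT hI hq).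
Qed.

End Main.

Theorem mainTheorem2 (n m : nat) (cl : 'I_m -> 'I_3 -> 'I_n * bool)
    (hn : 2 <= n) (hev : ~~ odd n) (hm : 0 < m) :
  Win (gC n m) (gR cl) (gedges n m) (vg0 n m) <-> qbf_true cl.
Proof. exact: (main_sec cl hn hm hev). Qed.
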